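(* Let $L\subseteq\mathbb{T}^{\mathcal{J}}$ be a tropical linear space with associated tropical Plücker vector $p$, whose finite coordinates are indexed by $n$-element subsets of $\mathcal{J}$ (so $L=L_p$). Then the following are equivalent: (1) $L$ is an $n$-dimensional isotropical linear space; (2) $L^\top=L^r$; (3) $p_{\mathcal{J}\setminus T}=p_{T^*}$ for all $T\subseteq\mathcal{J}$ of size $n$.
   Context: $\mathbb{T}=\mathbb{R}\cup\{\infty\}$. Let $\mathcal{J}=\{1,\dots,n,1^*,\dots,n^*\}$ with involution $i\leftrightarrow i^*$, $i^{**}=i$, and $T^*=\{t^*:t\in T\}$. For a finite set $E$, a tropical Plücker vector of rank $r$ is $p\in\mathbb{T}^{\mathcal{P}(E)}$ with nonempty support $\{S:p_S\ne\infty\}$, all support sets of size $r$, such that for all $S,T\subseteq E$ with $|S|=r-1$, $|T|=r+1$, the minimum $\min_{i\in T\setminus S}(p_{S\cup\{i\}}+p_{T\setminus\{i\}})$ is attained at least twice or equals $\infty$. For $T\subseteq E$, $|T|=r+1$, let $(d_T)_i=p_{T\setminus\{i\}}$ if $i\in T$, $\infty$ otherwise; Plücker circuits are $d_T+\lambda\mathbf{1}$ ($\lambda\in\mathbb{R}$) with nonempty support. $x,y\in\mathbb{T}^E$ are tropically orthogonal if $\min_k(x_k+y_k)$ is attained at least twice or equals $\infty$; $X^\top$ is the set of vectors tropically orthogonal to all of $X$. The tropical linear space of $p$ is $L_p=\{$Plücker circuits of $p\}^\top$; a tropical linear space is a set of this form, $p$ is its associated tropical Plücker vector, and its dimension is $r$.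 The reflection of $v\in\mathbb{T}^{\mathcal{J}}$ is $v^r$ with $v^r_i=v_{i^*}$, and $L^r=\{x^r:x\in L\}$. An $n$-dimensional tropical linear space $L\subseteq\mathbb{T}^{\mathcal{J}}$ is isotropical if for all $x,y\in L$ the minimum $\min(x_1+y_{1^*},\dots,x_n+y_{n^*},x_{1^*}+y_1,\dots,x_{n^*}+y_n)$ is attained at least twice or equals $\infty$. *)

(* Defs.v *)
From HB Require Import structures.
From mathcomp Require Import all_boot all_order all_algebra.
From mathcomp Require Import reals.
Set Implicit Arguments. Unset Strict Implicit. Unset Printing Implicit Defensive.
Import Order.TTheory GRing.Theory Num.Theory.
Local Open Scope ring_scope.

Section Tropical.
Variable R : realType.

(* Tropical numbers T = R ∪ {∞}: [Some a] is the real a, [None] is ∞. *)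
Definition trop := option R.

Definition tplus (x y : trop) : trop :=
  match x, y with Some a, Some b => Some (a + b) | _, _ => None end.

Definition tle (x y : trop) : Prop :=
  match x, y with
  | _, None => True
  | None, Some _ => False
  | Some a, Some b => (a <= b)%R
  end.

Definition min_twice (I : finType) (A : {set I}) (v : I -> trop) : Prop :=
  (forall i, i \in A -> v i = None) \/
  exists i j (a : R), [/\ i \in A, j \in A, i != j, v i = Some a & v j = Some a] /\
                       forall k, k \in A -> tle (Some a) (v k).

Variable E : finType.

Definition plucker (r : nat) (p : {set E} -> trop) : Prop :=
  [/\ exists S, p S <> None,
      forall S, p S <> None -> #|S| = r
    & forall S T : {set E}, #|S| = r.-1 -> #|T| = r.+1 ->
        min_twice (T :\: S) (fun i => tplus (p (i |: S)) (p (T :\ i)))].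
(* Note: the exchange condition is only imposed for |S| = r-1, which only
   makes sense for r >= 1; nonempty support forces the support sizes. *)

Definition dvec (p : {set E} -> trop) (T : {set E}) : E -> trop :=
  fun i => if i \in T then p (T :\ i) else None.

Definition plucker_circuit (r : nat) (p : {set E} -> trop) (c : E -> trop) : Prop :=
  exists T : {set E}, #|T| = r.+1 /\
  exists lam : R, (forall i, c i = tplus (dvec p T i) (Some lam)) /\
                  exists i, c i <> None.

Definition torth (x y : E -> trop) : Prop :=
  min_twice [set: E] (fun k => tplus (x k) (y k)).

Definition tperp (X : (E -> trop) -> Prop) : (E -> trop) -> Prop :=
  fun y => forall x, X x -> torth x y.

Definition tls_of (r : nat) (p : {set E} -> trop) : (E -> trop) -> Prop :=
  tperp (plucker_circuit r p).

Definition seteq (X Y : (E -> trop) -> Prop) : Prop := forall x, X x <-> Y x.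

Definition tls_dim (L : (E -> trop) -> Prop) (r : nat) : Prop :=
  exists p, plucker r p /\ seteq L (tls_of r p).

End Tropical.

(* The index set J = {1..n, 1*..n*}: inl i = i, inr i = i*. *)
Definition J (n : nat) : finType := ('I_n + 'I_n)%type.

Definition jstar (n : nat) (j : J n) : J n :=
  match j with inl i => inr i | inr i => inl i end.

Definition setstar (n : nat) (T : {set J n}) : {set J n} := (@jstar n) @: T.

Definition reflect_vec (R : realType) (n : nat) (v : J n -> trop R) : J n -> trop R :=
  fun i => v (@jstar n i).

Definition reflect_set (R : realType) (n : nat) (L : (J n -> trop R) -> Prop)
  : (J n -> trop R) -> Prop :=
  fun y => exists x, L x /\ y = reflect_vec x.

Definition isotropical (R : realType) (n : nat) (L : (J n -> trop R) -> Prop) : Prop :=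
  tls_dim L n /\
  forall x y, L x -> L y ->
    min_twice [set: J n] (fun k => tplus (x k) (y (@jstar n k))).

(* Main.v *)
Require Import Defs.
From HB Require Import structures.
From mathcomp Require Import all_boot all_order all_algebra reals.
From mathcomp Require Import zify ring lra.
From Stdlib Require Import Classical FunctionalExtensionality.
Set Implicit Arguments. Unset Strict Implicit. Unset Printing Implicit Defensive.
Import Order.TTheory GRing.Theory Num.Theory.
Local Open Scope ring_scope.



Lemma exmin (R : realType) (I : finType) (P : pred I) (F : I -> R) (i0 : I) :
  P i0 -> exists i, P i /\ forall j, P j -> F i <= F j.
Proof.
move=> Pi0; case: (arg_minP F Pi0) => i Pi Hi; exists i; split => // j Pj.

Qed.

Lemma exmaxn (I : finType) (P : pred I) (F : I -> nat) (i0 : I) :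
  P i0 -> exists i, P i /\ forall j, P j -> (F j <= F i)%N.
Proof.
move=> Pi0; case: (arg_maxnP F Pi0) => i Pi Hi; exists i; split => // j Pj.

Qed.

Definition mt2 (R : realType) (I : finType) (A : {set I}) (v : I -> trop R) : Prop :=
  forall k, k \in A -> forall c, v k = Some c ->
    exists j b, [/\ j \in A, j != k, v j = Some b & b <= c].

Lemma mtE (R : realType) (I : finType) (A : {set I}) (v : I -> trop R) :
  min_twice A v <-> mt2 A v.
Proof.
split.
  case=> [Hn | [i [j [a [[iA jA ij vi vj] Ha]]]]] k kA c vk.
    by rewrite Hn in vk.
  have := Ha k kA; rewrite vk /= => ac.
  case: (eqVneq i k) => [ik | ik].
    subst k; exists j, a; split => //; by rewrite eq_sym.
  by exists i, a.
move=> H.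
case: (boolP [exists k in A, v k != None]) => [/existsP [k1 /andP [k1A vk1]] | Hn].
  pose P := fun i => (i \in A) && (v i != None).
  have [i [/andP [iA vi] Hi]] := @exmin R I P (fun i => odflt 0 (v i)) k1
    (introT andP (conj k1A vk1)).
  case E : (v i) vi => [c|] // _.
  have [j [b [jA ji vj bc]]] := H i iA c E.
  have cb : c <= b.
    have := Hi j; rewrite /P jA vj E /=; by apply.
  right; exists i, j, c; split.
    split => //; first by rewrite eq_sym.
    by rewrite vj; congr Some; apply/eqP; rewrite eq_le bc cb.
  move=> k kA; case Ek : (v k) => [d|] //=.
  have := Hi k; rewrite /P kA Ek E /=; by apply.
left => k kA.
move: Hn; rewrite negb_exists => /forallP /(_ k); rewrite kA /=.
by case: (v k).
Qed.



Lemma tplusS (R : realType) (u v : trop R) c :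
  tplus u v = Some c -> exists a b, [/\ u = Some a, v = Some b & c = a + b].
Proof. by case: u => [a|] //; case: v => [b|] // [<-]; exists a, b. Qed.

Lemma tplusC (R : realType) (u v : trop R) : tplus u v = tplus v u.
Proof. by case: u => [a|]; case: v => [b|] //=; rewrite addrC. Qed.

Lemma tplus_shift (R : realType) (u v : trop R) l :
  tplus (tplus u (Some l)) v = tplus (tplus u v) (Some l).
Proof. by case: u => [a|]; case: v => [b|] //=; rewrite addrAC. Qed.

Lemma mt2_ext (R : realType) (I : finType) (A : {set I}) (v w : I -> trop R) :
  (forall k, k \in A -> v k = w k) -> mt2 A v -> mt2 A w.
Proof.
move=> Hvw H k kA c wk; rewrite -Hvw // in wk.
have [j [b [jA jk vj bc]]] := H k kA c wk.
by exists j, b; rewrite -Hvw.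
Qed.

Lemma mt2_setT (R : realType) (I : finType) (A : {set I}) (v : I -> trop R) :
  (forall k, k \notin A -> v k = None) -> (mt2 setT v <-> mt2 A v).
Proof.
move=> Hn; split => H k kA c vk.
  have [j [b [_ jk vj bc]]] := H k (in_setT k) c vk.
  exists j, b; split => //; apply/negPn/negP => /Hn; by rewrite vj.
have kA' : k \in A by apply/negPn/negP => /Hn; rewrite vk.
have [j [b [_ jk vj bc]]] := H k kA' c vk.
by exists j, b; rewrite in_setT.
Qed.

Lemma mt2_shift (R : realType) (I : finType) (A : {set I}) (v : I -> trop R) l :
  mt2 A v -> mt2 A (fun k => tplus (v k) (Some l)).
Proof.
move=> H k kA c /tplusS [a [b [vk [<-] ->]]].
have [j [b' [jA jk vj bc]]] := H k kA a vk.
by exists j, (b' + l); rewrite vj; split => //; rewrite lerD2r.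
Qed.

Lemma mt2_perm (R : realType) (I : finType) (f : I -> I) (v : I -> trop R) :
  involutive f -> mt2 setT v -> mt2 setT (fun k => v (f k)).
Proof.
move=> fK H k _ c vk.
have [j [b [_ jk vj bc]]] := H (f k) (in_setT _) c vk.
exists (f j), b; rewrite fK; split => //.
apply: contra jk => /eqP <-; by rewrite fK.
Qed.

Lemma torthC (R : realType) (E : finType) (x y : E -> trop R) :
  torth x y -> torth y x.
Proof.
rewrite /torth !mtE; apply: mt2_ext => k _; exact: tplusC.
Qed.

Lemma torth_shift (R : realType) (E : finType) (x y : E -> trop R) l :
  torth x y -> torth (fun k => tplus (x k) (Some l)) y.
Proof.
rewrite /torth !mtE => H; have := mt2_shift (l:=l) H.
apply: mt2_ext => k _; by rewrite tplus_shift.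
Qed.

Lemma torth_unshift (R : realType) (E : finType) (x y : E -> trop R) l :
  torth (fun k => tplus (x k) (Some l)) y -> torth x y.
Proof.
move=> /(torth_shift (- l)); rewrite /torth !mtE; apply: mt2_ext => k _.
by case: (x k) => [a|]; case: (y k) => [b|] //=; congr Some; lra.
Qed.

Lemma torth_perm (R : realType) (E : finType) (f : E -> E) (x y : E -> trop R) :
  involutive f -> torth x y -> torth (fun k => x (f k)) (fun k => y (f k)).
Proof. by move=> fK; rewrite /torth !mtE => /(mt2_perm fK). Qed.

Lemma jstarK n : involutive (@jstar n).
Proof. by case. Qed.

Lemma jstar_inj n : injective (@jstar n).
Proof. exact: inv_inj (@jstarK n). Qed.

Lemma mem_setstar n (A : {set J n}) x : (x \in setstar A) = (jstar x \in A).
Proof.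
apply/imsetP/idP => [[y yA ->] | H]; first by rewrite jstarK.
by exists (jstar x); rewrite ?jstarK.
Qed.

Lemma card_setstar n (A : {set J n}) : #|setstar A| = #|A|.
Proof. exact: card_imset (@jstar_inj n). Qed.

Lemma setstarK n (A : {set J n}) : setstar (setstar A) = A.
Proof. by apply/setP => x; rewrite !mem_setstar jstarK. Qed.

Lemma setstarC n (A : {set J n}) : setstar (~: A) = ~: setstar A.
Proof. by apply/setP => x; rewrite !(mem_setstar, inE). Qed.

Lemma card_J n : #|J n| = (n + n)%N.
Proof. by rewrite card_sum card_ord. Qed.

Lemma J_pos n (i : J n) : (0 < n)%N.
Proof. by case: i => i; apply: leq_ltn_trans (ltn_ord i). Qed.



Lemma setU1D1 (E : finType) (B : {set E}) k j :
  k != j -> k |: (B :\ j) = (k |: B) :\ j.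
Proof.
move=> kj; apply/setP => t; rewrite !inE.
case: (eqVneq t k) => [->|]; by rewrite ?kj //= andbC.
Qed.

Lemma card_swap (E : finType) (B : {set E}) k j :
  k \notin B -> j \in B -> #|(k |: B) :\ j| = #|B|.
Proof.
move=> kB jB.
have kj : k != j by apply: contraNneq kB => ->.
rewrite -setU1D1 // cardsU1 inE negb_and kB orbT /=.
by rewrite (cardsD1 j B) jB.
Qed.

Lemma card_U1 (E : finType) (B : {set E}) k :
  k \notin B -> #|k |: B| = (#|B|).+1.
Proof. by move=> kB; rewrite cardsU1 kB. Qed.

Lemma card_D1 (E : finType) (B : {set E}) k :
  k \in B -> #|B :\ k| = (#|B|).-1.
Proof. by move=> kB; rewrite (cardsD1 k B) kB. Qed.

Lemma sum_swap (R : realType) (E : finType) (F : E -> R) (D : {set E}) j k :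
  j \in D -> k \notin D ->
  \sum_(i in (k |: D) :\ j) F i = \sum_(i in D) F i + F k - F j.
Proof.
move=> jD kD.
have kj : k != j by apply: contraNneq kD => ->.
rewrite -setU1D1 // big_setU1 /=; last by rewrite inE negb_and kD orbT.
rewrite (big_setD1 j jD) /=; lra.
Qed.

Lemma swap_setD (E : finType) (B Z : {set E}) k j :
  k \notin Z -> j \notin Z ->
  ((k |: B) :\ j) :\: Z = (k |: (B :\: Z)) :\ j.
Proof.
move=> kZ jZ; apply/setP => t; rewrite !inE.
case: (eqVneq t k) => [->|]; first by rewrite kZ.
by case: (t \in Z); rewrite ?andbF ?andbT //= andbA.
Qed.

Lemma swap_setI (E : finType) (B Z : {set E}) k j :
  k \notin Z -> j \notin Z ->
  ((k |: B) :\ j) :&: Z = B :&: Z.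
Proof.
move=> kZ jZ; apply/setP => t; rewrite !inE.
case: (eqVneq t k) => [->|]; first by rewrite (negbTE kZ) !andbF.
case: (eqVneq t j) => [->|]; first by rewrite (negbTE jZ) !andbF.
by [].
Qed.

Lemma swap_setI_in (E : finType) (B Z : {set E}) k j :
  k \in Z -> j \notin Z -> k \notin B ->
  #|((k |: B) :\ j) :&: Z| = (#|B :&: Z|).+1.
Proof.
move=> kZ jZ kB.
have -> : ((k |: B) :\ j) :&: Z = k |: (B :&: Z).
  apply/setP => t; rewrite !inE.
  have kj : k != j by apply: contraNneq jZ => <-.
  case: (eqVneq t k) => [->|]; first by rewrite kZ kj.
  case: (eqVneq t j) => [->|]; first by rewrite (negbTE jZ) !andbF.
  by [].
by rewrite cardsU1 inE (negbTE kB).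
Qed.



Lemma setU1_idem (E : finType) (A : {set E}) j : j \in A -> j |: A = A.
Proof. move=> jA; apply/setP => t; rewrite !inE; by case: (eqVneq t j) => [->|]. Qed.

Lemma orth (R : realType) (E : finType) (r : nat) (p : {set E} -> trop R)
    (x y : E -> trop R) :
  (forall S : {set E}, p S <> None -> #|S| = r) -> (exists S0, p S0 <> None) ->
  (forall T : {set E}, #|T| = r.+1 -> torth (dvec p T) x) ->
  (forall S : {set E}, #|S| = r.-1 -> torth (fun i => p (i |: S)) y) ->
  torth x y.
Proof.
move=> Hsz [S0 pS0] Hx Hy.
rewrite /torth mtE => k0 _ c Hk0.
have [a [b [xk0 yk0 ->]]] := tplusS Hk0.
apply: NNPP => Hno.
have Hlt : forall j a' b', j != k0 -> x j = Some a' -> y j = Some b' -> a + b < a' + b'.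
  move=> j a' b' jk xj yj; rewrite ltNge; apply/negP => le; apply: Hno.
  exists j, (a' + b'); split => //; by rewrite ?in_setT /= ?xj ?yj.
pose Z := [set i | x i == None].
have k0Z : k0 \notin Z by rewrite inE xk0.
pose P1 := fun B : {set E} => p B != None.
have [Bm [P1Bm HBm]] := @exmaxn _ P1 (fun B => #|B :&: Z|) S0 (introN eqP pS0).
set k := #|Bm :&: Z| in HBm.
pose P2 := fun B : {set E} => (p B != None) && (#|B :&: Z| == k).
pose xr := fun i => odflt 0 (x i).
pose key := fun B : {set E} => odflt 0 (p B) - \sum_(i in B :\: Z) xr i.
have [B1 [P2B1 HB1]] := @exmin R _ P2 key Bm ltac:(by apply/andP; split).
have [B [P2B HB k0B]] : exists B, [/\ P2 B, (forall B', P2 B' -> key B <= key B') & k0 \in B].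
  case: (boolP (k0 \in B1)) => k0B1; first by exists B1.
  move: (P2B1) => /andP [pB1 /eqP cB1].
  case E1 : (p B1) pB1 => [v1|] // _.
  have szB1 := Hsz B1 ltac:(by rewrite E1).
  have szT : #|k0 |: B1| = r.+1 by rewrite card_U1 // szB1.
  have := Hx _ szT; rewrite /torth mtE => H.
  have dk0 : tplus (dvec p (k0 |: B1) k0) (x k0) = Some (v1 + a).
    by rewrite /dvec setU11 setU1K // E1 xk0.
  have [j [w [_ jk0 Hj wle]]] := H k0 (in_setT _) _ dk0.
  have [dj [xj [Edj Exj Ew]]] := tplusS Hj; rewrite Ew in wle.
  move: Edj; rewrite /dvec; case: ifP => // jT Edj.
  have jB1 : j \in B1 by move: jT; rewrite !inE (negbTE jk0).
  have jZ : j \notin Z by rewrite inE Exj.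
  exists ((k0 |: B1) :\ j); split.
  - by rewrite /P2 Edj /= swap_setI // cB1 eqxx.
  - move=> B' P2B'; apply: le_trans (HB1 _ P2B').
    rewrite /key Edj E1 /= swap_setD // sum_swap; last first.
      by rewrite inE negb_and k0B1 orbT.
      by rewrite inE jB1 jZ.
    rewrite /xr xk0 Exj /=; lra.
  - by rewrite !inE eq_sym jk0 eqxx.
move: (P2B) => /andP [pB /eqP cB].
case E2 : (p B) pB => [v|] // _.
have szB := Hsz B ltac:(by rewrite E2).
have szS : #|B :\ k0| = r.-1 by rewrite card_D1 // szB.
have := Hy _ szS; rewrite /torth mtE => H.
have ek0 : tplus (p (k0 |: (B :\ k0))) (y k0) = Some (v + b) by rewrite setD1K // E2 yk0.
have [j [w [_ jk0 Hj wle]]] := H k0 (in_setT _) _ ek0.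
have [pj [yj [Epj Eyj Ew]]] := tplusS Hj; rewrite Ew in wle.
have jB : j \notin B.
  apply/negP => jB.
  have jS : j \in B :\ k0 by rewrite !inE jk0 jB.
  move: Epj; rewrite setU1_idem // => Epj.
  have := Hsz (B :\ k0) ltac:(by rewrite Epj).
  rewrite szS; have : (0 < #|B|)%N by apply/card_gt0P; exists k0.
  rewrite szB; lia.
rewrite setU1D1 // in Epj.
case Exj: (x j) => [xj|].
- have jZ : j \notin Z by rewrite inE Exj.
  have P2' : P2 ((j |: B) :\ k0) by rewrite /P2 Epj /= swap_setI // cB eqxx.
  have := HB _ P2'; rewrite /key Epj E2 /= swap_setD // sum_swap; first last.
      by rewrite inE negb_and jB orbT.
      by rewrite inE k0B k0Z.
  rewrite /xr Exj xk0 /=.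
  have := Hlt j xj yj jk0 Exj Eyj; lra.
- have jZ : j \in Z by rewrite inE Exj.
  have := swap_setI_in jZ k0Z jB.
  have := HBm ((j |: B) :\ k0) ltac:(by rewrite /P1 Epj).
  rewrite cB; lia.
Qed.



Lemma ex_other (R : realType) (E : finType) (u v : E -> trop R) k a b :
  torth u v -> u k = Some a -> v k = Some b ->
  exists j a' b', [/\ j != k, u j = Some a', v j = Some b' & a' + b' <= a + b].
Proof.
rewrite /torth mtE => H uk vk.
have [j [w [_ jk Hj wle]]] := H k (in_setT _) (a + b) ltac:(by rewrite /= uk vk).
have [a' [b' [uj vj Ew]]] := tplusS Hj.
by exists j, a', b'; rewrite -Ew.
Qed.

Lemma pNone (R : realType) (E : finType) (r : nat) (p : {set E} -> trop R) (S : {set E}) j :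
  (forall S : {set E}, p S <> None -> #|S| = r) -> #|S| = r.-1 -> j \in S -> p S = None.
Proof.
move=> Hsz szS jS; case E1 : (p S) => [v|] //.
have := Hsz S ltac:(by rewrite E1); rewrite szS.
have : (0 < #|S|)%N by apply/card_gt0P; exists j.
rewrite szS; lia.
Qed.

Lemma pl_torth (R : realType) (E : finType) (r : nat) (p : {set E} -> trop R) (S T : {set E}) :
  plucker r p -> #|S| = r.-1 -> #|T| = r.+1 ->
  torth (fun i => p (i |: S)) (dvec p T).
Proof.
case=> _ Hsz Hex szS szT.
have := Hex S T szS szT; rewrite mtE /torth => H.
apply/mtE; apply/(mt2_setT (A := T :\: S)).
  move=> k; rewrite inE negb_and negbK => /orP [kS | kT].
    by rewrite setU1_idem // (pNone Hsz szS kS).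
  by rewrite /dvec (negbTE kT); case: (p _).
apply: mt2_ext H => k; rewrite inE => /andP [_ kT].
by rewrite /dvec kT.
Qed.

Lemma two_pt (R : realType) (E : finType) (u v : E -> trop R) x y c :
  torth u v -> x != y ->
  (forall i, i != x -> i != y -> tplus (u i) (v i) = None) ->
  tplus (u x) (v x) = Some c -> tplus (u y) (v y) = Some c.
Proof.
rewrite /torth mtE => H xy Hn Hx.
have [j [w [_ jx Hj wle]]] := H x (in_setT _) c Hx.
have jy : j = y.
  apply/eqP; apply: contraT => jy; by rewrite Hn in Hj.
subst j.
have [j' [w' [_ jy Hj' wle']]] := H y (in_setT _) w Hj.
have jx' : j' = x.
  apply/eqP; apply: contraT => jx'; by rewrite Hn in Hj'.
subst j'; rewrite Hx in Hj'; case: Hj' => Hw'.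
by rewrite Hj; congr Some; apply/eqP; rewrite eq_le wle Hw' wle'.
Qed.



Lemma eq_of_setD0 (E : finType) (A B : {set E}) :
  #|B :\: A| = 0%N -> #|A| = #|B| -> B = A.
Proof.
move=> /eqP; rewrite cards_eq0 setD_eq0 => sBA cAB.
by apply/eqP; rewrite eqEcard sBA cAB leqnn.
Qed.

Lemma step1 (R : realType) (E : finType) (r : nat) (p q : {set E} -> trop R) :
  (forall S : {set E}, p S <> None -> #|S| = r) ->
  (forall U : {set E}, q U <> None -> #|U| = r) ->
  (forall S T : {set E}, #|S| = r.-1 -> #|T| = r.+1 ->
      torth (fun i => p (i |: S)) (dvec q T)) ->
  forall k (A B : {set E}), #|B :\: A| = k -> q A <> None -> p B <> None -> p A <> None.
Proof.
move=> Hp Hq Hm; elim=> [|k IH] A B cBA qA pB.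
  by rewrite -(eq_of_setD0 cBA) // (Hp _ pB) (Hq _ qA).
have [b bBA] : exists b, b \in B :\: A by apply/card_gt0P; rewrite cBA.
move: (bBA); rewrite inE => /andP [bA bB].
case Ep : (p B) pB => [pb|] // _.
case Eq : (q A) qA => [qa|] // _.
have szB := Hp B ltac:(by rewrite Ep).
have szA := Hq A ltac:(by rewrite Eq).
have szS : #|B :\ b| = r.-1 by rewrite card_D1 // szB.
have szT : #|b |: A| = r.+1 by rewrite card_U1 // szA.
have [j [a' [b' [jb Hpj Hqj _]]]] := ex_other (Hm _ _ szS szT)
  (k := b) (a := pb) (b := qa) ltac:(by rewrite /= setD1K // Ep) ltac:(by rewrite /dvec setU11 setU1K // Eq).
move: Hqj; rewrite /dvec; case: ifP => // jT _.
have jA : j \in A by move: jT; rewrite !inE (negbTE jb).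
have jS : j \notin B :\ b.
  apply/negP => jS; move: Hpj; rewrite setU1_idem // (pNone Hp szS jS) //.
have jB : j \notin B by move: jS; rewrite !inE jb.
apply: (IH A ((j |: B) :\ b)) => //; last by rewrite -setU1D1 // Hpj.
have -> : ((j |: B) :\ b) :\: A = (B :\: A) :\ b.
  apply/setP => t; rewrite !inE.
  case: (eqVneq t j) => [->|]; first by rewrite jA /= !andbF.
  case: (eqVneq t j) => [->|]; first by rewrite jA /= ?andbF. by case: (t \in A); case: (t == b).
by rewrite card_D1 // cBA.
by rewrite Eq.
Qed.

Lemma step2 (R : realType) (E : finType) (r : nat) (p q : {set E} -> trop R) :
  plucker r p ->
  (forall U : {set E}, q U <> None -> #|U| = r) ->
  (forall S T : {set E}, #|S| = r.-1 -> #|T| = r.+1 ->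
      torth (fun i => p (i |: S)) (dvec q T)) ->
  forall k (A B : {set E}) qa pa, #|B :\: A| = k -> p B <> None ->
    q A = Some qa -> p A = Some pa ->
    exists qb pb, [/\ q B = Some qb, p B = Some pb & qb - pb = qa - pa].
Proof.
move=> Hpl Hq Hm; case: (Hpl) => _ Hp _.
elim=> [|k IH] A B qa pa cBA pB qA pA.
  rewrite (eq_of_setD0 cBA); first by exists qa, pa.
  by rewrite (Hp _ pB) (Hq A ltac:(by rewrite qA)).
have [b bBA] : exists b, b \in B :\: A by apply/card_gt0P; rewrite cBA.
move: (bBA); rewrite inE => /andP [bA bB].
case Ep : (p B) pB => [pb|] // _.
have szB := Hp B ltac:(by rewrite Ep).
have szA := Hq A ltac:(by rewrite qA).
have szS : #|B :\ b| = r.-1 by rewrite card_D1 // szB.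
have szT : #|b |: A| = r.+1 by rewrite card_U1 // szA.
have [j [a' [b' [jb Hpj HA1 _]]]] := ex_other (pl_torth Hpl szS szT)
  (k := b) (a := pb) (b := pa) ltac:(by rewrite /= setD1K // Ep) ltac:(by rewrite /dvec setU11 setU1K // pA).
move: HA1; rewrite /dvec; case: ifP => // jT HA1.
have jA : j \in A by move: jT; rewrite !inE (negbTE jb).
have jS : j \notin B :\ b.
  apply/negP => jS; move: Hpj; rewrite setU1_idem // (pNone Hp szS jS) //.
have jB : j \notin B by move: jS; rewrite !inE jb.
have bj : b != j by rewrite eq_sym.
have szS' : #|A :\ j| = r.-1 by rewrite card_D1 // szA.
have Ht := Hm _ _ szS' szT.
have := two_pt (x := b) (y := j) (c := b' + qa) Ht bj.
have Hside : forall i, i != b -> i != j ->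
    tplus (p (i |: (A :\ j))) (dvec q (b |: A) i) = None.
  move=> i ib ij; rewrite /dvec; case: ifP => iT; last by case: (p _).
  have iS : i \in A :\ j by move: iT; rewrite !inE (negbTE ib) ij.
  by rewrite setU1_idem // (pNone Hp szS' iS).
move=> /(_ Hside).
rewrite /= setU1D1 // HA1 /dvec setU11 setU1K // qA jT setD1K // pA => /(_ erefl) H2.
have [pa' [qa1 [[<-] qA1 Hs]]] := tplusS H2.
have cBA1 : #|B :\: ((b |: A) :\ j)| = k.
  have -> : B :\: ((b |: A) :\ j) = (B :\: A) :\ b.
    apply/setP => t; rewrite !inE.
    case: (eqVneq t j) => [->|]; first by rewrite (negbTE jB) /= ?andbF.
    by case: (t \in A); case: (t == b).
  by rewrite card_D1 // cBA.
have [qb [pb' [qB pB' Hd]]] := IH ((b |: A) :\ j) B qa1 b' cBA1 ltac:(by rewrite Ep) qA1 HA1.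
move: pB'; rewrite Ep => -[Epb]; subst pb'; by exists qb, pb; split => //; lra.
Qed.

Lemma h2 (R : realType) (E : finType) (r : nat) (p q : {set E} -> trop R) :
  plucker r p ->
  (forall U : {set E}, q U <> None -> #|U| = r) -> (exists U, q U <> None) ->
  (forall S T : {set E}, #|S| = r.-1 -> #|T| = r.+1 ->
      torth (fun i => p (i |: S)) (dvec q T)) ->
  exists l, forall U, q U = tplus (p U) (Some l).
Proof.
move=> Hpl Hq [A0 qA0] Hm; case: (Hpl) => [[B0 pB0] Hp _].
have pA0 := step1 Hp Hq Hm (k := #|B0 :\: A0|) (A := A0) (B := B0) erefl qA0 pB0.
case Eq0 : (q A0) qA0 => [qa|] // _.
case Ep0 : (p A0) pA0 => [pa|] // _.
exists (qa - pa) => U.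
case EpU : (p U) => [pu|].
  have [qb [pb [qU pU Hd]]] := step2 Hpl Hq Hm (k := #|U :\: A0|) (A := A0) (B := U)
     erefl ltac:(by rewrite EpU) Eq0 Ep0.
  rewrite qU /=; congr Some; move: pU; rewrite EpU => -[Epb]; subst pb; lra.
case EqU : (q U) => [qu|] //.
exfalso; apply: (step1 Hp Hq Hm (k := #|A0 :\: U|) (A := U) (B := A0) erefl);
  by rewrite ?EqU ?Ep0.
Qed.



Definition cocirc (R : realType) (E : finType) (p : {set E} -> trop R) (S : {set E}) :=
  fun i => p (i |: S).

Lemma torth_ext (R : realType) (E : finType) (x x' y y' : E -> trop R) :
  (forall k, x k = x' k) -> (forall k, y k = y' k) -> torth x y -> torth x' y'.
Proof.
move=> Hx Hy; rewrite /torth !mtE; apply: mt2_ext => k _; by rewrite Hx Hy.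
Qed.

Lemma cocirc_L (R : realType) (E : finType) (r : nat) (p : {set E} -> trop R) (S : {set E}) :
  plucker r p -> #|S| = r.-1 -> tls_of r p (cocirc p S).
Proof.
move=> Hpl szS c [T [szT [lam [Hc _]]]].
have := torth_shift lam (torthC (pl_torth Hpl szS szT)).
apply: torth_ext => k //; by rewrite Hc.
Qed.

Lemma circ_orth (R : realType) (E : finType) (r : nat) (p : {set E} -> trop R)
    (T : {set E}) x :
  tls_of r p x -> #|T| = r.+1 -> torth (dvec p T) x.
Proof.
move=> Hx szT.
case: (boolP [exists i, dvec p T i != None]) => [/existsP [i di] | Hn].
  apply: (torth_unshift (l := 0)); apply: Hx.
  exists T; split => //; exists 0; split => //; exists i.
  by case: (dvec p T i) di.
rewrite /torth mtE => k _ c; move: Hn; rewrite negb_exists => /forallP /(_ k).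
by rewrite negbK => /eqP ->.
Qed.

Lemma torth_J0 (R : realType) (n : nat) (x y : J n -> trop R) : n = 0%N -> torth x y.
Proof. move=> n0; rewrite /torth mtE => k; have := J_pos k; rewrite {1}n0 //. Qed.

Lemma card_Cstar n (T : {set J n}) : #|~: setstar T| = ((n + n) - #|T|)%N.
Proof.
have := cardsC (setstar T); rewrite card_setstar card_J; lia.
Qed.



Definition P3 (R : realType) n (p : {set J n} -> trop R) :=
  forall T : {set J n}, #|T| = n -> p (~: T) = p (setstar T).

Lemma jstar_eq n (t i : J n) : (jstar t == i) = (t == jstar i).
Proof. exact: (inv_eq (@jstarK n)). Qed.

Lemma I1 (R : realType) n (p : {set J n} -> trop R) (T : {set J n}) i :
  plucker n p -> P3 p -> #|T| = n.+1 ->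
  dvec p T (jstar i) = p (i |: ~: setstar T).
Proof.
move=> [_ Hp _] H3 szT; rewrite /dvec; case: ifP => iT.
  have iT' : i \in setstar T by rewrite mem_setstar.
  have szU : #|setstar T :\ i| = n by rewrite card_D1 // card_setstar szT.
  have := H3 _ szU.
  have -> : ~: (setstar T :\ i) = i |: ~: setstar T.
    by apply/setP => t; rewrite !inE negb_and negbK.
  have -> : setstar (setstar T :\ i) = T :\ jstar i.
    apply/setP => t; rewrite !(inE, mem_setstar) jstarK.
    by rewrite (inv_eq (@jstarK n)).
  by move=> ->.
have n0 := J_pos i.
have iC : i \in ~: setstar T by rewrite inE mem_setstar iT.
rewrite setU1_idem // (pNone Hp _ iC) //.
rewrite card_Cstar szT; lia.
Qed.

Lemma I2 (R : realType) n (p : {set J n} -> trop R) (S : {set J n}) i :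
  plucker n p -> P3 p -> #|S| = n.-1 ->
  p (jstar i |: S) = dvec p (~: setstar S) i.
Proof.
move=> Hpl H3 szS.
have n0 := J_pos i.
have szT : #|~: setstar S| = n.+1 by rewrite card_Cstar szS; lia.
rewrite -{2}(jstarK i) (I1 _ Hpl H3 szT).
by rewrite -setstarC setCK setstarK.
Qed.

Lemma K_P3 (R : realType) n (p : {set J n} -> trop R) :
  plucker n p ->
  (forall S S' : {set J n}, #|S| = n.-1 -> #|S'| = n.-1 ->
      torth (cocirc p S) (reflect_vec (cocirc p S'))) ->
  P3 p.
Proof.
move=> Hpl HK; case: (Hpl) => [[B0 pB0] Hp _].
pose q := fun U => p (~: setstar U).
have Hq : forall U, q U <> None -> #|U| = n.
  move=> U /Hp; rewrite card_Cstar; have : (#|U| <= n + n)%N by rewrite -card_J max_card. lia.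
have Hqne : exists U, q U <> None.
  by exists (setstar (~: B0)); rewrite /q setstarK setCK.
have Hm : forall S T : {set J n}, #|S| = n.-1 -> #|T| = n.+1 ->
    torth (fun i => p (i |: S)) (dvec q T).
  move=> S T szS szT.
  have szS' : #|~: setstar T| = n.-1 by rewrite card_Cstar szT; lia.
  apply: torth_ext (HK S _ szS szS') => k //.
  rewrite /reflect_vec /cocirc /dvec /q; case: ifP => kT.
    congr p; apply/setP => t; rewrite !(inE, mem_setstar) negb_and negbK.
    by rewrite (inv_eq (@jstarK n)).
  have n0 := J_pos k.
  have iC : jstar k \in ~: setstar T by rewrite inE mem_setstar jstarK kT.
  by rewrite setU1_idem // (pNone Hp szS' iC).
have [l Hl] := h2 Hpl Hq Hqne Hm.
have l0 : l = 0.
  have H1 := Hl (setstar (~: B0)); rewrite /q setstarK setCK in H1.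
  have H2 := Hl B0; rewrite /q -setstarC in H2.
  case EB : (p B0) pB0 H1 H2 => [b|] // _ H1.
  have [u [l' [Eu [<-] Eb]]] := tplusS (esym H1).
  by rewrite Eu /= => -[]; lra.
move=> T _; have := Hl (setstar T); rewrite /q setstarK l0 => ->.
by case: (p _) => //= a; rewrite addr0.
Qed.



Lemma main_13 (R : realType) n (L : (J n -> trop R) -> Prop) (p : {set J n} -> trop R) :
  plucker n p -> seteq L (tls_of n p) -> isotropical L -> P3 p.
Proof.
move=> Hpl HL [_ Hiso]; apply: K_P3 => // S S' szS szS'.
apply: Hiso; apply/HL; exact: cocirc_L.
Qed.

Lemma main_23 (R : realType) n (L : (J n -> trop R) -> Prop) (p : {set J n} -> trop R) :
  plucker n p -> seteq L (tls_of n p) -> seteq (tperp L) (reflect_set L) -> P3 p.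
Proof.
move=> Hpl HL H2; apply: K_P3 => // S S' szS szS'.
have : tperp L (reflect_vec (cocirc p S')).
  apply/H2; exists (cocirc p S'); split => //; apply/HL; exact: cocirc_L.
apply; apply/HL; exact: cocirc_L.
Qed.

Lemma main_21 (R : realType) n (L : (J n -> trop R) -> Prop) (p : {set J n} -> trop R) :
  plucker n p -> seteq L (tls_of n p) -> seteq (tperp L) (reflect_set L) -> isotropical L.
Proof.
move=> Hpl HL H2; split; first by exists p.
move=> x y Lx Ly.
have : tperp L (reflect_vec y) by apply/H2; exists y.
by apply.
Qed.

Lemma main_32 (R : realType) n (L : (J n -> trop R) -> Prop) (p : {set J n} -> trop R) :
  plucker n p -> seteq L (tls_of n p) -> P3 p -> seteq (tperp L) (reflect_set L).
Proof.
move=> Hpl HL H3; case: (Hpl) => [Hne Hp _].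
case: (posnP n) => [n0 | npos].
  have toJ0 : forall x y : J n -> trop R, torth x y by move=> x y; exact: torth_J0.
  move=> y; split => _.
    exists (reflect_vec y); split.
      by apply/HL => c _; apply: toJ0.
    by apply: functional_extensionality => k; rewrite /reflect_vec jstarK.
  by move=> z _; apply: toJ0.
move=> y; split.
  move=> Hy; exists (reflect_vec y); split; last first.
    by apply: functional_extensionality => k; rewrite /reflect_vec jstarK.
  apply/HL => c [T [szT [lam [Hc _]]]].
  have szS : #|~: setstar T| = n.-1 by rewrite card_Cstar szT; lia.
  have H1 : torth (cocirc p (~: setstar T)) y.
    by apply: Hy; apply/HL; exact: cocirc_L.
  have H1' : torth (reflect_vec (dvec p T)) y.
    apply: torth_ext H1 => k //; by rewrite /reflect_vec /cocirc (I1 _ Hpl H3 szT).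
  have := torth_perm (@jstarK n) H1'.
  move=> /(torth_shift lam).
  apply: torth_ext => k; by rewrite ?Hc /reflect_vec ?jstarK.
move=> [x [Lx ->]] z Lz.
apply: (orth (r := n) Hp Hne).
  move=> T szT; apply: circ_orth szT; exact/HL.
move=> S szS.
have szT : #|~: setstar S| = n.+1 by rewrite card_Cstar szS; lia.
have H1 : torth (dvec p (~: setstar S)) x by apply: circ_orth szT; exact/HL.
have H1' : torth (reflect_vec (cocirc p S)) x.
  apply: torth_ext H1 => k //; by rewrite /reflect_vec /cocirc (I2 _ Hpl H3 szS).
have := torth_perm (@jstarK n) H1'.
apply: torth_ext => k //; by rewrite /reflect_vec jstarK.
Qed.

Theorem theorem7p3 (R : realType) (n : nat) (L : (J n -> trop R) -> Prop)
    (p : {set J n} -> trop R) :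
  plucker n p -> seteq L (tls_of n p) ->
  (isotropical L <-> seteq (tperp L) (reflect_set L)) /\
  (seteq (tperp L) (reflect_set L) <->
     forall T : {set J n}, #|T| = n -> p (~: T) = p (setstar T)).
Proof.
move=> Hpl HL; split; split.
- by move=> Hi; apply: (main_32 Hpl HL); apply: (main_13 Hpl HL).
- exact: main_21 Hpl HL.
- exact: main_23 Hpl HL.
- exact: main_32 Hpl HL.
Qed.
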